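(* Let $\mathfrak{G}$ be a CFSTR and let $G$ be its non-flow subnetwork. The following are equivalent: (1) $\mathfrak{G}$ passes the Jacobian Criterion; (2) every square embedded network of $G$ has nonnegative orientation; (3) $G$ has no self-catalyzing reaction, and every square embedded network $N$ of $G$ satisfying both of the following has nonnegative orientation: (a) $N$ contains no outflow reaction $X_i\to0$, no inflow reaction $0\to X_i$, no generalized inflow reaction $0\to\sum_i a_iX_i$ ($a_i\ge0$), and no reaction of the form $aX_i\to bX_i$ with $0\le b\le a$; (b) each species of $N$ appears in at least two reactions of $N$, where a reaction together with its reverse is counted only once.
   Context: A chemical reaction network has species $X_1,\dots,X_s$ and reactions $y\to y'$ with complexes $y,y'\in\mathbb{Z}_{\ge0}^s$, $y\ne y'$; $y_i$ is the stoichiometric coefficient of $X_i$ in $y$. A flow reaction is $0\to X_i$ (inflow) or $X_i\to0$ (outflow); other reactions are non-flow. A CFSTR contains the outflow $X_i\to0$ for every species; its non-flow subnetwork consists of all its non-flow reactions. A reaction $y\to y'$ is self-catalyzing if some species $X_j$ has $1\le y_j<y'_j$. Square networks: for a list of $n$ reactions $y_k\to y_k'$ on $n$ species, the reactant matrix $M$ has $k$-th row $y_k$, the reaction matrix $R$ has $k$-th row $y_k-y_k'$, and the orientation is $\operatorname{Or}=\operatorname{sign}(\det M\det R)$; the empty network has orientation $+1$. Square embedded networks: for $0\le k\le s$, a $k$-square embedded network of $G$ is determined by a $k$-element set $S$ of species and a $k$-element set of non-flow reactions of $G$; it is the square network with species set $S$ whose $k$ reactions are obtained from the chosen reactions by deleting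 from both complexes all species not in $S$ (kept as a list, so repeated reactions may occur). Jacobian Criterion: a CFSTR with $s$ species passes it if for every choice of $s$ distinct reactions, none an inflow, the $s\times s$ reactant and reaction matrices of these reactions (columns indexed by all species) give nonnegative orientation. *)

(* Defs.v *)
From HB Require Import structures.
From mathcomp Require Import all_boot all_order all_algebra.
Set Implicit Arguments. Unset Strict Implicit. Unset Printing Implicit Defensive.
Import Order.TTheory GRing.Theory Num.Theory.
Local Open Scope ring_scope.

(* Species of a network on n species are indexed by 'I_n.
   A complex is a vector in Z_{>=0}^n; a reaction y -> y' is the pair (y, y'). *)
Definition cplx (n : nat) := {ffun 'I_n -> nat}.
Definition rxn (n : nat) := (cplx n * cplx n)%type.

Definition zero_cplx (n : nat) : cplx n := [ffun => 0%N].
Definition unit_cplx (n : nat) (i : 'I_n) : cplx n := [ffun j => (j == i : nat)].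

Definition is_inflow n (r : rxn n) : bool :=
  (r.1 == zero_cplx n) && [exists i, r.2 == unit_cplx i].
Definition is_outflow n (r : rxn n) : bool :=
  [exists i, r.1 == unit_cplx i] && (r.2 == zero_cplx n).
Definition is_flow n (r : rxn n) : bool := is_inflow r || is_outflow r.

Definition is_network n (net : seq (rxn n)) : Prop :=
  uniq net /\ (forall r, r \in net -> r.1 != r.2).

Definition is_CFSTR n (net : seq (rxn n)) : Prop :=
  is_network net /\ (forall i : 'I_n, (unit_cplx i, zero_cplx n) \in net).

Definition nonflow_sub n (net : seq (rxn n)) : seq (rxn n) :=
  [seq r <- net | ~~ is_flow r].

Definition self_catalyzing n (r : rxn n) : bool :=
  [exists j, (1 <= r.1 j)%N && (r.1 j < r.2 j)%N].

Definition reactant_mx n (r : 'I_n -> rxn n) : 'M[int]_n :=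
  \matrix_(k, i) ((r k).1 i)%:Z.
Definition reaction_mx n (r : 'I_n -> rxn n) : 'M[int]_n :=
  \matrix_(k, i) (((r k).1 i)%:Z - ((r k).2 i)%:Z).
Definition orientation n (r : 'I_n -> rxn n) : int :=
  sgz (\det (reactant_mx r) * \det (reaction_mx r)).

Definition passes_Jacobian s (net : seq (rxn s)) : Prop :=
  forall r : 'I_s -> rxn s, injective r -> (forall k, r k \in net) ->
    (forall k, ~~ is_inflow (r k)) -> 0 <= orientation r.

(* Square embedded networks: species set given by an injective S : 'I_k -> 'I_s
   (its image, in some order), reactions by an injective rs : 'I_k -> reactions
   of G (a k-element set of reactions of G, in some order); restriction keeps
   only the species in S. *)
Definition embed s k (S : 'I_k -> 'I_s) (rs : 'I_k -> rxn s) : 'I_k -> rxn k :=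
  fun p => ([ffun j => (rs p).1 (S j)], [ffun j => (rs p).2 (S j)]).

Definition is_embedding_data s (G : seq (rxn s)) k (S : 'I_k -> 'I_s)
  (rs : 'I_k -> rxn s) : Prop :=
  injective S /\ injective rs /\ (forall p, rs p \in G).

Definition all_embedded_nonneg s (G : seq (rxn s)) : Prop :=
  forall k (S : 'I_k -> 'I_s) (rs : 'I_k -> rxn s),
    is_embedding_data G S rs -> 0 <= orientation (embed S rs).

Definition is_gen_inflow n (r : rxn n) : bool := r.1 == zero_cplx n.
Definition is_single_species_degradation n (r : rxn n) : bool :=
  [exists i, [forall j, (j != i) ==> (r.1 j == 0%N) && (r.2 j == 0%N)]
             && (r.2 i <= r.1 i)%N].
Definition cond_a n (N : 'I_n -> rxn n) : Prop :=
  forall p, ~~ [|| is_outflow (N p), is_inflow (N p), is_gen_inflow (N p)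
                 | is_single_species_degradation (N p)].

Definition appears n (r : rxn n) (j : 'I_n) : bool := (r.1 j != 0%N) || (r.2 j != 0%N).
Definition rev_rxn n (r : rxn n) : rxn n := (r.2, r.1).
Definition cond_b n (N : 'I_n -> rxn n) : Prop :=
  forall j : 'I_n, exists p q : 'I_n,
    [/\ p != q, appears (N p) j, appears (N q) j & N q != rev_rxn (N p)].

Definition cond3 s (G : seq (rxn s)) : Prop :=
  (forall r, r \in G -> ~~ self_catalyzing r) /\
  (forall k (S : 'I_k -> 'I_s) (rs : 'I_k -> rxn s),
    is_embedding_data G S rs ->
    cond_a (embed S rs) -> cond_b (embed S rs) ->
    0 <= orientation (embed S rs)).

(* Main.v *)
Require Import Defs.
From HB Require Import structures.
From mathcomp Require Import all_boot all_order all_algebra ring lra.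
Import Order.TTheory GRing.Theory Num.Theory.
Set Implicit Arguments. Unset Strict Implicit. Unset Printing Implicit Defensive.
Local Open Scope ring_scope.

Lemma det_row1 n (A : 'M[int]_n) p j :
  (forall j', j' != j -> A p j' = 0) -> \det A = A p j * cofactor A p j.
Proof.
move=> H; rewrite (expand_det_row A p) (bigD1 j) //= big1 ?addr0 //.
by move=> j' /H ->; rewrite mul0r.
Qed.

Lemma det_col1 n (A : 'M[int]_n) p j :
  (forall p', p' != p -> A p' j = 0) -> \det A = A p j * cofactor A p j.
Proof.
move=> H; rewrite (expand_det_col A j) (bigD1 p) //= big1 ?addr0 //.
by move=> p' /H ->; rewrite mul0r.
Qed.

Lemma det_opp_rows n (A : 'M[int]_n) p q :
  p != q -> (forall i, A q i = - A p i) -> \det A = 0.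
Proof.
move=> npq H.
pose B := \matrix_(i, j) (if i == q then A p j else A i j).
have -> : \det A = (-1) * \det B + 0 * \det A.
  apply: (determinant_multilinear (i0 := q)).
  - by apply/rowP => j; rewrite !mxE eqxx H; ring.
  - by apply/matrixP => i j; rewrite !mxE eq_sym (negbTE (neq_lift q i)).
  - by [].
rewrite (@determinant_alternate _ _ B p q) //; first by rewrite !mulr0 mul0r addr0.
by move=> j; rewrite !mxE (negbTE npq) eqxx.
Qed.

Lemma sgz_expand n (A B : 'M[int]_n) p j :
  \det A = A p j * cofactor A p j -> \det B = B p j * cofactor B p j ->
  sgz (\det A * \det B) = sgz (A p j * B p j) *
     sgz (\det (row' p (col' j A)) * \det (row' p (col' j B))).
Proof.
move=> -> ->; rewrite /cofactor -sgzM; congr sgz.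
set e := (-1) ^+ _.
have e2 : e * e = 1 by rewrite /e -exprMn mulrNN mulr1 expr1n.
transitivity (A p j * B p j * (e * e) *
  (\det (row' p (col' j A)) * \det (row' p (col' j B)))); first by ring.
by rewrite e2 mulr1.
Qed.
Lemma reactE n s (S : 'I_n -> 'I_s) (rs : 'I_n -> rxn s) p j :
  reactant_mx (embed S rs) p j = ((rs p).1 (S j))%:Z.
Proof. by rewrite /reactant_mx /embed mxE ffunE. Qed.

Lemma reacnE n s (S : 'I_n -> 'I_s) (rs : 'I_n -> rxn s) p j :
  reaction_mx (embed S rs) p j = ((rs p).1 (S j))%:Z - ((rs p).2 (S j))%:Z.
Proof. by rewrite /reaction_mx /embed mxE !ffunE. Qed.

Lemma orient_ext n (r1 r2 : 'I_n -> rxn n) :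
  (forall p i, (r1 p).1 i = (r2 p).1 i /\ (r1 p).2 i = (r2 p).2 i) ->
  orientation r1 = orientation r2.
Proof.
move=> H; rewrite /orientation /reactant_mx /reaction_mx.
have -> : \matrix_(k, i) ((r1 k).1 i)%:Z = \matrix_(k, i) ((r2 k).1 i)%:Z :> 'M[int]_n.
  by apply/matrixP => i j; rewrite !mxE (H i j).1.
congr (sgz (_ * \det _)).
by apply/matrixP => i j; rewrite !mxE (H i j).1 (H i j).2.
Qed.

Definition minor n s (S : 'I_n.+1 -> 'I_s) (rs : 'I_n.+1 -> rxn s) p j :=
  embed (fun x => S (lift j x)) (fun x => rs (lift p x)).

Lemma orient_gen n s (S : 'I_n.+1 -> 'I_s) (rs : 'I_n.+1 -> rxn s) p j :
  let M := reactant_mx (embed S rs) in let R := reaction_mx (embed S rs) in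
  \det M = M p j * cofactor M p j -> \det R = R p j * cofactor R p j ->
  orientation (embed S rs) = sgz (M p j * R p j) * orientation (minor S rs p j).
Proof.
move=> M R hM hR; rewrite {1}/orientation (sgz_expand hM hR) /orientation.
congr (_ * sgz (_ * _)); congr (determinant _); apply/matrixP => a b;
  by rewrite /M /R !mxE /embed !ffunE.
Qed.

Lemma orient_row n s (S : 'I_n.+1 -> 'I_s) (rs : 'I_n.+1 -> rxn s) p j :
  (forall j', j' != j -> (rs p).1 (S j') = 0%N /\ (rs p).2 (S j') = 0%N) ->
  orientation (embed S rs) =
  sgz (((rs p).1 (S j))%:Z * (((rs p).1 (S j))%:Z - ((rs p).2 (S j))%:Z)) *
  orientation (minor S rs p j).
Proof.
move=> H; rewrite -(reacnE S rs p j) -(reactE S rs p j); apply: orient_gen.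
  by apply: det_row1 => j' /H [h1 h2]; rewrite reactE h1.
by apply: det_row1 => j' /H [h1 h2]; rewrite reacnE h1 h2.
Qed.

Lemma orient_col n s (S : 'I_n.+1 -> 'I_s) (rs : 'I_n.+1 -> rxn s) p j :
  (forall p', p' != p -> (rs p').1 (S j) = 0%N /\ (rs p').2 (S j) = 0%N) ->
  orientation (embed S rs) =
  sgz (((rs p).1 (S j))%:Z * (((rs p).1 (S j))%:Z - ((rs p).2 (S j))%:Z)) *
  orientation (minor S rs p j).
Proof.
move=> H; rewrite -(reacnE S rs p j) -(reactE S rs p j); apply: orient_gen.
  by apply: det_col1 => j' /H [h1 h2]; rewrite reactE h1.
by apply: det_col1 => j' /H [h1 h2]; rewrite reacnE h1 h2.
Qed.

Lemma orient_zero_row n s (S : 'I_n -> 'I_s) (rs : 'I_n -> rxn s) p :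
  (forall j, (rs p).1 (S j) = 0%N) -> orientation (embed S rs) = 0.
Proof.
move=> H; rewrite /orientation.
rewrite (@det_row1 _ _ p p); first by rewrite reactE H mul0r mul0r sgz0.
by move=> j' _; rewrite reactE H.
Qed.

Lemma orient_zero_col n s (S : 'I_n -> 'I_s) (rs : 'I_n -> rxn s) j :
  (forall p, (rs p).1 (S j) = 0%N) -> orientation (embed S rs) = 0.
Proof.
move=> H; rewrite /orientation.
rewrite (@det_col1 _ _ j j); first by rewrite reactE H mul0r mul0r sgz0.
by move=> j' _; rewrite reactE H.
Qed.

Lemma minor_data s (G : seq (rxn s)) n (S : 'I_n.+1 -> 'I_s) (rs : 'I_n.+1 -> rxn s) p j :
  is_embedding_data G S rs ->
  is_embedding_data G (fun x => S (lift j x)) (fun x => rs (lift p x)).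
Proof.
case=> iS [irs inG]; split; last split.
- by move=> x y /iS /lift_inj.
- by move=> x y /irs /lift_inj.
- by move=> x; apply: inG.
Qed.

Lemma unit_neq0 s (i : 'I_s) : (unit_cplx i == zero_cplx s) = false.
Proof. by apply/negbTE/eqP => /ffunP /(_ i); rewrite !ffunE eqxx. Qed.

Lemma sgzmul_ge0 (x y : int) : 0 <= x -> 0 <= y -> 0 <= sgz x * y.
Proof. by move=> hx hy; rewrite mulr_ge0 // sgz_ge0. Qed.

Lemma prod_nonneg (a b : nat) :
  ~~ ((1 <= a)%N && (a < b)%N) -> 0 <= a%:Z * (a%:Z - b%:Z).
Proof.
case: a => [|a] h; first by rewrite mul0r.
rewrite mulr_ge0 // subr_ge0 lez_nat.
by rewrite leqNgt; apply: contra h => ->.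
Qed.

(* (2) -> (1) *)
Lemma P_lemma s (net : seq (rxn s)) :
  all_embedded_nonneg (nonflow_sub net) ->
  forall k (S : 'I_k -> 'I_s) (rs : 'I_k -> rxn s), injective S -> injective rs ->
  (forall p, rs p \in net) -> (forall p, ~~ is_inflow (rs p)) ->
  0 <= orientation (embed S rs).
Proof.
move=> h2; elim=> [|n IH] S rs iS irs inN ninf.
  by apply: h2; split; [|split] => // -[].
case: (boolP [forall p, ~~ is_flow (rs p)]) => [/forallP hf | ].
  by apply: h2; split; [|split] => // p; rewrite mem_filter hf inN.
rewrite negb_forall => /existsP [p]; rewrite negbK /is_flow (negbTE (ninf p)) /=.
move=> /andP [/existsP [i /eqP h1] /eqP h2'].
case: (boolP [exists j, S j == i]) => [/existsP [j /eqP hj] | hn].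
  rewrite (@orient_row _ _ _ _ p j).
    rewrite h1 h2' !ffunE hj eqxx /= subr0 mulr1 sgzE mul1r.
    apply: IH.
    - by move=> x y /iS /lift_inj.
    - by move=> x y /irs /lift_inj.
    - by move=> x; apply: inN.
    - by move=> x; apply: ninf.
  move=> j' nj; rewrite h1 h2' !ffunE; split => //.
  by rewrite -hj (inj_eq iS) (negbTE nj).
rewrite (@orient_zero_row _ _ _ _ p) // => j; rewrite h1 ffunE.
move: hn; rewrite negb_exists => /forallP /(_ j) /negbTE -> //.
Qed.

Definition ext T k (f : 'I_k -> T) (x : T) : 'I_k.+1 -> T :=
  fun a => if unlift ord_max a is Some j then f j else x.

Lemma ext_lift T k (f : 'I_k -> T) x j : ext f x (lift ord_max j) = f j.
Proof. by rewrite /ext liftK. Qed.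

Lemma ext_max T k (f : 'I_k -> T) x : ext f x ord_max = x.
Proof. by rewrite /ext unlift_none. Qed.

Lemma ext_inj (T : eqType) k (f : 'I_k -> T) x :
  injective f -> (forall j, f j != x) -> injective (ext f x).
Proof.
move=> finj hx a b; rewrite /ext.
case: (unliftP ord_max a) => [a'|] ->; case: (unliftP ord_max b) => [b'|] -> //= h.
- by rewrite (finj _ _ h).
- by move: (hx a'); rewrite h eqxx.
- by move: (hx b'); rewrite h eqxx.
Qed.

Lemma exists_fresh k s (S : 'I_k -> 'I_s) :
  injective S -> (k < s)%N -> exists i, forall j, S j != i.
Proof.
move=> iS lt.
pose A := [pred x | x \in codom S].
have : (0 < #|[predC A]|)%N.
  have := cardC A.
  have -> : #|A| = k by rewrite -[RHS]card_ord -(card_codom iS); apply: eq_card.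
  rewrite card_ord => h.
  by rewrite -(ltn_add2l k) addn0 h.
case/card_gt0P => i; rewrite !inE => hi; exists i => j.
by apply: contra hi => /eqP <-; exact: codom_f.
Qed.

Lemma sign_sq (b : bool) : ((-1) ^+ b * (-1) ^+ b : int) = 1.
Proof. by rewrite -exprMn mulrNN mulr1 expr1n. Qed.

Lemma orient_perm k (S : 'I_k -> 'I_k) (rs : 'I_k -> rxn k) (iS : injective S) :
  orientation (embed S rs) = orientation rs.
Proof.
pose sg := perm.perm iS.
have hA : reactant_mx (embed S rs) = col_perm sg (reactant_mx rs).
  by apply/matrixP => i j; rewrite reactE !mxE perm.permE.
have hB : reaction_mx (embed S rs) = col_perm sg (reaction_mx rs).
  by apply/matrixP => i j; rewrite reacnE !mxE perm.permE.
rewrite /orientation hA hB !col_permE !det_mulmx det_perm.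
set e := (-1) ^+ _.
have e2 : e * e = 1 by apply: sign_sq.
congr sgz; transitivity (\det (reactant_mx rs) * \det (reaction_mx rs) * (e * e)); first by ring.
by rewrite e2 mulr1.
Qed.

Lemma orient_id k (r : 'I_k -> rxn k) : orientation (embed id r) = orientation r.
Proof. by apply: orient_ext => p i; rewrite /embed /= !ffunE. Qed.

(* (1) -> (2) *)
Lemma Q_lemma s (net : seq (rxn s)) :
  is_CFSTR net -> passes_Jacobian net ->
  forall m k, (k + m)%N = s -> forall (S : 'I_k -> 'I_s) (rs : 'I_k -> rxn s),
  injective S -> injective rs ->
  (forall p, rs p \in net) -> (forall p, ~~ is_inflow (rs p)) ->
  0 <= orientation (embed S rs).
Proof.
move=> [_ hout] hJ m; elim: m => [|m IH] k ek S rs iS irs inN ninf.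
  rewrite addn0 in ek; subst k.
  by rewrite (orient_perm rs iS); apply: hJ.
have lt : (k < s)%N by rewrite -ek -addSnnS leq_addr.
have [i hi] := exists_fresh iS lt.
case: (boolP [exists p, rs p == (unit_cplx i, zero_cplx s)]) => [/existsP [p /eqP hp] | hn].
  rewrite (@orient_zero_row _ _ _ _ p) // => j; rewrite hp ffunE /=.
  by rewrite (negbTE (hi j)).
pose o := (unit_cplx i, zero_cplx s).
have ho : forall p, rs p != o by move=> p; move: hn; rewrite negb_exists => /forallP.
have ek2 : (k.+1 + m)%N = s by rewrite addSnnS.
have := IH k.+1 ek2 (ext S i) (ext rs o) (ext_inj iS hi) (ext_inj irs ho).
have -> : orientation (embed (ext S i) (ext rs o)) = orientation (embed S rs).
  rewrite (@orient_row _ _ _ _ ord_max ord_max).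
    rewrite !ext_max /o /= !ffunE eqxx /= subr0 mulr1 sgzE mul1r.
    by apply: orient_ext => p x; rewrite /minor /embed /= !ffunE !ext_lift.
  move=> j' nj; rewrite ext_max /o /= !ffunE; split => //.
  case: (unliftP ord_max j') nj => [j ->|->]; last by rewrite eqxx.
  by rewrite ext_lift (negbTE (hi j)).
apply.
- move=> p; case: (unliftP ord_max p) => [p' ->|->]; rewrite ?ext_lift ?ext_max //.
  exact: hout.
- move=> p; case: (unliftP ord_max p) => [p' ->|->]; rewrite ?ext_lift ?ext_max //.
  by rewrite /is_inflow /o /= unit_neq0.
Qed.

Lemma appearsE n s (S : 'I_n -> 'I_s) (rs : 'I_n -> rxn s) p j :
  appears (embed S rs p) j = ((rs p).1 (S j) != 0%N) || ((rs p).2 (S j) != 0%N).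
Proof. by rewrite /appears /embed /= !ffunE. Qed.

Lemma cond3_embedded s (G : seq (rxn s)) : cond3 G -> all_embedded_nonneg G.
Proof.
move=> [hnc h3] k; elim: k => [|n IH] S rs hd.
  by rewrite /orientation !det_mx00 mulr1 sgzE.
have hd' := hd; case: hd' => iS [irs inG].
have IHm : forall p j, 0 <= orientation (minor S rs p j).
  by move=> p j; apply: IH; apply: minor_data.
rewrite leNgt; apply/negP => hneg.
have contra0 : orientation (embed S rs) = 0 -> False.
  by move=> h; move: hneg; rewrite h ltxx.
have contra1 : 0 <= orientation (embed S rs) -> False.
  by rewrite leNgt hneg.
suff [ha hb] : cond_a (embed S rs) /\ cond_b (embed S rs).
  by apply: contra1; apply: h3.
split.
- move=> p; apply/negP => /or4P [/andP [/existsP [i /eqP h1] /eqP h2] | /andP [/eqP h1 _] | /eqP h1 | ].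
  + apply: contra1; rewrite (@orient_row _ _ _ _ p i).
      apply: sgzmul_ge0 => //.
      have e1 := congr1 (fun f : cplx _ => f i) h1; have e2 := congr1 (fun f : cplx _ => f i) h2.
      move: e1 e2 => /=; rewrite !ffunE eqxx => -> ->.
      by rewrite subr0 mulr1.
    move=> j' nj; have e1 := congr1 (fun f : cplx _ => f j') h1; have e2 := congr1 (fun f : cplx _ => f j') h2.
    by move: e1 e2 => /=; rewrite !ffunE (negbTE nj) => -> ->.
  + apply: contra0; apply: (@orient_zero_row _ _ _ _ p) => j.
    by have := congr1 (fun f : cplx _ => f j) h1; rewrite /= !ffunE.
  + apply: contra0; apply: (@orient_zero_row _ _ _ _ p) => j.
    by have := congr1 (fun f : cplx _ => f j) h1; rewrite /= !ffunE.
  + move=> /existsP [i /andP [/forallP h hle]].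
    apply: contra1; rewrite (@orient_row _ _ _ _ p i).
      apply: sgzmul_ge0 => //.
      move: hle; rewrite /= !ffunE => hle.
      by rewrite mulr_ge0 // subr_ge0 lez_nat.
    move=> j' nj; move: (h j'); rewrite nj /= !ffunE => /andP [/eqP -> /eqP ->].
    by [].
- move=> j.
  case: (boolP [exists p, appears (embed S rs p) j]) => [/existsP [p hp] | hn].
    case: (boolP [exists q, (q != p) && appears (embed S rs q) j]) =>
       [/existsP [q /andP [hqp hq]] | hn2].
      exists p, q; split => //; first by rewrite eq_sym.
      apply/eqP => hrev; apply: contra0.
      rewrite /orientation (@det_opp_rows _ (reaction_mx (embed S rs)) p q) ?mulr0 ?sgzE //.
        by rewrite eq_sym.
      move=> i; rewrite !reacnE.
      have e1 := congr1 (fun r : rxn _ => r.1 i) hrev; have e2 := congr1 (fun r : rxn _ => r.2 i) hrev.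
      move: e1 e2; rewrite /= !ffunE => -> ->; by rewrite opprB.
    exfalso; apply: contra1; rewrite (@orient_col _ _ _ _ p j).
      apply: sgzmul_ge0 => //; apply: prod_nonneg.
      have := hnc _ (inG p); rewrite negb_exists => /forallP /(_ (S j)) //.
    move=> q nq; move: hn2; rewrite negb_exists => /forallP /(_ q).
    rewrite nq appearsE /= negb_or !negbK => /andP [/eqP -> /eqP ->]; by [].
  exfalso; apply: contra0; apply: (@orient_zero_col _ _ _ _ j) => p.
  move: hn; rewrite negb_exists => /forallP /(_ p).
  by rewrite appearsE negb_or negbK => /andP [/eqP -> _].
Qed.

Lemma embedded_cond3 s (G : seq (rxn s)) : all_embedded_nonneg G -> cond3 G.
Proof.
move=> h2; split; last by move=> k S rs hd _ _; apply: h2.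
move=> r hr; apply/negP => /existsP [j /andP [h1 hlt]].
have hd : is_embedding_data G (fun _ : 'I_1 => j) (fun _ : 'I_1 => r).
  by split; [|split] => // a b _; rewrite (ord1 a) (ord1 b).
have := h2 1%N _ _ hd; rewrite /orientation !det_mx11 reactE reacnE.
rewrite sgz_ge0 pmulr_rge0 ?ltz_nat // subr_ge0 lez_nat leqNgt.
by rewrite hlt.
Qed.

Theorem mainTheorem3 (s : nat) (net : seq (rxn s)) :
  is_CFSTR net ->
  (passes_Jacobian net <-> all_embedded_nonneg (nonflow_sub net)) /\
  (all_embedded_nonneg (nonflow_sub net) <-> cond3 (nonflow_sub net)).
Proof.
move=> hC; split; last by split; [apply: embedded_cond3 | apply: cond3_embedded].
split.
- move=> hJ k S rs [iS [irs inG]].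
  apply: (Q_lemma hC hJ (m := (s - k)%N)) => //.
  + rewrite subnKC //.
    have := card_codom iS; rewrite card_ord => <-.
    by rewrite -[X in (_ <= X)%N](card_ord s); apply: max_card.
  + by move=> p; have := inG p; rewrite mem_filter => /andP [].
  + move=> p; have := inG p; rewrite mem_filter => /andP [hf _].
    by apply: contra hf => h; rewrite /is_flow h.
- move=> h2 r ir inN ninf.
  by rewrite -orient_id; apply: (P_lemma h2) => // x y.
Qed.
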